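(* Let $\Sigma$ be a finite alphabet and let $f:\Sigma^*\to\Sigma^*$ be a function computed by a Turing machine $\mathcal{M} = (\Sigma_\Box, Q, q_{in}, q_{fin}, \delta)$ in time $g:\mathbb{N}\to\mathbb{N}$. Then there exist a closed term $\overline{\mathcal{M}}\in\Lambda_{\mathtt{det}}$ and constants $A,B,C>0$ (depending only on $\mathcal{M}$) such that for every $s\in\Sigma^*$, $$\overline{\mathcal{M}}\;\ulcorner s\urcorner^{\Sigma^*} \to_{\mathtt{det}}^{n} \ulcorner f(s)\urcorner^{\Sigma^*}$$ for some $n$ with $A\,(g(|s|)+|s|) \le n \le B\,(g(|s|)+|s|) + C$, i.e. $n = \Theta(g(|s|)+|s|)$.
   Context: The deterministic $\lambda$-calculus $\Lambda_{\mathtt{det}}$ has terms and values given by the grammar: terms $t ::= v \mid t\,v$; values $v ::= \lambda x.t \mid x$. Evaluation contexts are $E ::= [\cdot] \mid E\,v$ (they never enter abstractions). The reduction $\to_{\mathtt{det}}$ is the closure under evaluation contexts of $(\lambda x.t)\,s \mapsto t\{x:=s\}$; $t \to_{\mathtt{det}}^n s$ means $t$ reduces to $s$ in exactly $n$ steps. Application associates to the left. Scott encoding: for a finite totally ordered alphabet $\Gamma = \{c_1,\dots,c_m\}$, $\ulcorner c_i\urcorner^{\Gamma} := \lambda x_1.\cdots.\lambda x_m.x_i$, $\ulcorner \varepsilon\urcorner^{\Gamma^*} := \lambda x_1.\cdots.\lambda x_m.\lambda y.y$ and $\ulcorner c_i r\urcorner^{\Gamma^*} := \lambda x_1.\cdots.\lambda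 x_m.\lambda y.\,x_i\,\ulcorner r\urcorner^{\Gamma^*}$. Turing machines: $\mathcal{M} = (\Sigma_\Box, Q, q_{in}, q_{fin}, \delta)$ where $\Sigma$ is a finite alphabet, $\Sigma_\Box = \Sigma\cup\{\Box\}$ with blank symbol $\Box\notin\Sigma$, $Q$ is a finite set of states, $q_{in},q_{fin}\in Q$, and $\delta : Q\times\Sigma_\Box \rightharpoonup Q\times\Sigma_\Box\times\{\leftarrow,\rightarrow,\downarrow\}$ is defined exactly on pairs with first component $\neq q_{fin}$. A configuration is $(s,a,r,q)\in\Sigma_\Box^*\times\Sigma_\Box\times\Sigma_\Box^*\times Q$ (tape left of the head, head cell, tape right of the head, state). The transition relation $\to_{\mathcal{M}}$: if $\delta(q,a) = (q',b,\downarrow)$ then $(s,a,r,q)\to_{\mathcal{M}}(s,b,r,q')$; if $\delta(q,a)=(q',b,\leftarrow)$ then $(s'c,a,r,q)\to_{\mathcal{M}}(s',c,br,q')$ and $(\varepsilon,a,r,q)\to_{\mathcal{M}}(\varepsilon,\Box,br,q')$; if $\delta(q,a)=(q',b,\rightarrow)$ then $(s,a,cr',q)\to_{\mathcal{M}}(sb,c,r',q')$ and $(s,a,\varepsilon,q)\to_{\mathcal{M}}(sb,\Box,\varepsilon,q')$. The initial configuration for $s\in\Sigma^*$ is $(\varepsilon,\Box,s,q_{in})$ and the final configuration for $s$ is $(\varepsilon,\Box,s,q_{fin})$. $\mathcal{M}$ computes $f:\Sigma^*\to\Sigma^*$ in time $g$ if for every $s\in\Sigma^*$ the initial configuration for $s$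 evolves via $\to_{\mathcal{M}}$ to the final configuration for $f(s)$ in exactly $g(|s|)$ steps. *)

(* Defs.v *)
From mathcomp Require Import all_boot all_order all_algebra.
Set Implicit Arguments. Unset Strict Implicit. Unset Printing Implicit Defensive.

Inductive lterm : Type :=
| Val : lvalue -> lterm
| App : lterm -> lvalue -> lterm
with lvalue : Type :=
| Var : nat -> lvalue
| Lam : lterm -> lvalue.

Fixpoint lift_t (d c : nat) (t : lterm) : lterm :=
  match t with
  | Val v => Val (lift_v d c v)
  | App t v => App (lift_t d c t) (lift_v d c v)
  end
with lift_v (d c : nat) (v : lvalue) : lvalue :=
  match v with
  | Var n => if n < c then Var n else Var (n + d)
  | Lam t => Lam (lift_t d c.+1 t)
  end.

Fixpoint subst_t (k : nat) (s : lvalue) (t : lterm) : lterm :=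
  match t with
  | Val v => Val (subst_v k s v)
  | App t v => App (subst_t k s t) (subst_v k s v)
  end
with subst_v (k : nat) (s : lvalue) (v : lvalue) : lvalue :=
  match v with
  | Var n => if n < k then Var n else if n == k then lift_v k 0 s else Var n.-1
  | Lam t => Lam (subst_t k.+1 s t)
  end.

Fixpoint closed_at_t (k : nat) (t : lterm) : bool :=
  match t with
  | Val v => closed_at_v k v
  | App t v => closed_at_t k t && closed_at_v k v
  end
with closed_at_v (k : nat) (v : lvalue) : bool :=
  match v with
  | Var n => n < k
  | Lam t => closed_at_t k.+1 t
  end.

Definition lclosed (t : lterm) : bool := closed_at_t 0 t.

Inductive det_step : lterm -> lterm -> Prop :=
| det_beta (t : lterm) (s : lvalue) :
    det_step (App (Val (Lam t)) s) (subst_t 0 s t)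
| det_ctx (t t' : lterm) (v : lvalue) :
    det_step t t' -> det_step (App t v) (App t' v).

Inductive det_stepn : nat -> lterm -> lterm -> Prop :=
| det_refl (t : lterm) : det_stepn 0 t t
| det_trans (n : nat) (t u w : lterm) :
    det_step t u -> det_stepn n u w -> det_stepn n.+1 t w.

(* The alphabet Sigma = {c_1,...,c_m} is a finType, ordered by its enumeration:
   c_(i+1) is the element with enum_rank i. *)
Fixpoint lams (n : nat) (t : lterm) : lterm :=
  match n with
  | 0 => t
  | n.+1 => Val (Lam (lams n t))
  end.

(* Under \x_1...\x_m.\y, the index of y is 0 and of x_(i+1) is m - i. *)
Fixpoint scott_str (S : finType) (w : seq S) : lvalue :=
  match w with
  | [::] => Lam (lams #|S| (Val (Var 0)))
  | c :: r => Lam (lams #|S| (App (Val (Var (#|S| - enum_rank c))) (scott_str r)))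
  end.

Inductive move := MLeft | MRight | MStay.

(* Sigma_box = option S, with None = the blank symbol. A configuration
   (s, a, r, q): s = tape left of the head (its last element is the cell
   adjacent to the head), a = head cell, r = tape right of the head. *)
Definition config (S Q : Type) : Type :=
  (seq (option S) * option S * seq (option S) * Q)%type.

Section TM.
Variables (S : Type) (Q : Type).
Variable delta : Q -> option S -> option (Q * option S * move).

Inductive tm_step : config S Q -> config S Q -> Prop :=
| tm_stay s a r q q' b :
    delta q a = Some (q', b, MStay) -> tm_step (s, a, r, q) (s, b, r, q')
| tm_left s' c a r q q' b :
    delta q a = Some (q', b, MLeft) ->
    tm_step (rcons s' c, a, r, q) (s', c, b :: r, q')
| tm_left_edge a r q q' b :
    delta q a = Some (q', b, MLeft) ->
    tm_step ([::], a, r, q) ([::], None, b :: r, q')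
| tm_right s a c r' q q' b :
    delta q a = Some (q', b, MRight) ->
    tm_step (s, a, c :: r', q) (rcons s b, c, r', q')
| tm_right_edge s a q q' b :
    delta q a = Some (q', b, MRight) ->
    tm_step (s, a, [::], q) (rcons s b, None, [::], q').

Inductive tm_stepn : nat -> config S Q -> config S Q -> Prop :=
| tm_refl c : tm_stepn 0 c c
| tm_trans n c d e : tm_step c d -> tm_stepn n d e -> tm_stepn n.+1 c e.
End TM.

Definition tm_wf (S Q : eqType) (qfin : Q)
  (delta : Q -> option S -> option (Q * option S * move)) : Prop :=
  forall q a, delta q a = None <-> q = qfin.

Definition tm_computes (S Q : Type) (qin qfin : Q)
  (delta : Q -> option S -> option (Q * option S * move))
  (f : seq S -> seq S) (g : nat -> nat) : Prop :=
  forall s : seq S,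
    tm_stepn delta (g (size s))
      ([::], None, map Some s, qin) ([::], None, map Some (f s), qfin).

(* Main.v *)
Require Import Defs.
From mathcomp Require Import all_boot all_order all_algebra.
From mathcomp Require Import zify.
Import Order.TTheory GRing.Theory Num.Theory.
Set Implicit Arguments. Unset Strict Implicit. Unset Printing Implicit Defensive.

Scheme lterm_ind2 := Induction for lterm Sort Prop
with lvalue_ind2 := Induction for lvalue Sort Prop.
Combined Scheme lterm_mut from lterm_ind2, lvalue_ind2.

Fixpoint inst_t (d : nat) (env : seq lvalue) (t : lterm) : lterm :=
  match t with
  | Val v => Val (inst_v d env v)
  | App t v => App (inst_t d env t) (inst_v d env v)
  end
with inst_v (d : nat) (env : seq lvalue) (v : lvalue) : lvalue :=
  match v with
  | Var n => if n < d then Var n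
             else if n - d < size env then nth (Var 0) env (n - d)
             else Var (n - size env)
  | Lam t => Lam (inst_t d.+1 env t)
  end.

Definition cv (v : lvalue) := closed_at_v 0 v.

Lemma lift_closed :
  (forall t k, closed_at_t k t -> forall d c, k <= c -> lift_t d c t = t) /\
  (forall v k, closed_at_v k v -> forall d c, k <= c -> lift_v d c v = v).
Proof.
apply: lterm_mut => /=.
- by move=> v IH k Hk d c Hc; rewrite (IH k).
- by move=> t IHt v IHv k /andP[Ht Hv] d c Hc; rewrite (IHt k) // (IHv k).
- by move=> n k Hn d c Hc; have -> : n < c by apply: leq_trans Hc.
- by move=> t IH k Hk d c Hc; rewrite (IH k.+1).
Qed.

Lemma closed_mono :
  (forall t k, closed_at_t k t -> forall k', k <= k' -> closed_at_t k' t) /\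
  (forall v k, closed_at_v k v -> forall k', k <= k' -> closed_at_v k' v).
Proof.
apply: lterm_mut => /=.
- by move=> v IH k Hk k' H; exact: (IH k Hk k' H).
- by move=> t IHt v IHv k /andP[Ht Hv] k' H; rewrite (IHt k) // (IHv k).
- by move=> n k Hn k' H; apply: leq_trans H.
- by move=> t IH k Hk k' H; exact: (IH k.+1 Hk k'.+1 H).
Qed.

Lemma cv_any v k : cv v -> closed_at_v k v.
Proof. by move=> H; apply: ((proj2 closed_mono) v 0 H k). Qed.

Lemma subst_inst s : cv s ->
  (forall t k, subst_t k s t = inst_t k [:: s] t) /\
  (forall v k, subst_v k s v = inst_v k [:: s] v).
Proof.
move=> Hs; apply: lterm_mut => /=.
- by move=> v IH k; rewrite IH.
- by move=> t IHt v IHv k; rewrite IHt IHv.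
- move=> n k; case: ltnP => // Hkn.
  case: eqP => [->|Hne]; first by rewrite subnn /= (proj2 lift_closed s 0).
  have -> : (n - k < 1) = false by apply/negbTE; rewrite -leqNgt; lia.
  by rewrite subn1.
- by move=> t IH k; rewrite IH.
Qed.

Lemma inst_closed :
  (forall t k, closed_at_t k t -> forall d env, k <= d -> inst_t d env t = t) /\
  (forall v k, closed_at_v k v -> forall d env, k <= d -> inst_v d env v = v).
Proof.
apply: lterm_mut => /=.
- by move=> v IH k Hk d env Hd; rewrite (IH k).
- by move=> t IHt v IHv k /andP[Ht Hv] d env Hd; rewrite (IHt k) // (IHv k).
- by move=> n k Hn d env Hd; have -> : n < d by apply: leq_trans Hd.
- by move=> t IH k Hk d env Hd; rewrite (IH k.+1).
Qed.

Lemma inst_cv v d env : cv v -> inst_v d env v = v.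
Proof. by move=> H; apply: ((proj2 inst_closed) v 0). Qed.

Lemma inst_comp s env : cv s -> all cv env ->
  (forall t d, inst_t d [:: s] (inst_t d.+1 env t) = inst_t d (s :: env) t) /\
  (forall v d, inst_v d [:: s] (inst_v d.+1 env v) = inst_v d (s :: env) v).
Proof.
move=> Hs Henv; apply: lterm_mut => /=.
- by move=> v IH d; rewrite IH.
- by move=> t IHt v IHv d; rewrite IHt IHv.
- move=> n d /=.
  have [Hlt|Hge] := ltnP n d.
  + by rewrite ltnS ltnW //= Hlt.
  have [Heq|Hgt] := eqVneq n d.
  + by subst n; rewrite ltnSn /= ?ltnn ?subnn.
  have Hgt' : d < n by rewrite ltn_neqAle eq_sym Hgt Hge.
  have -> : (n < d.+1) = false by apply/negbTE; rewrite -leqNgt.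
  case: ltnP => H1.
  * rewrite inst_cv; last by apply: (all_nthP (Var 0) Henv).
    have -> : n - d < (size env).+1 by lia.
    by have -> : n - d = (n - d.+1).+1 by lia.
  * rewrite /=.
    have -> : (n - size env < d) = false by apply/negbTE; rewrite -leqNgt; lia.
    have -> : (n - size env - d < 1) = false by apply/negbTE; rewrite -leqNgt; lia.
    have -> : (n - d < (size env).+1) = false by apply/negbTE; rewrite -leqNgt; lia.
    by rewrite subn1 subnS.
- by move=> t IH d; rewrite IH.
Qed.

Lemma inst_nil :
  (forall t d, inst_t d [::] t = t) /\ (forall v d, inst_v d [::] v = v).
Proof.
apply: lterm_mut => /=.
- by move=> v IH d; rewrite IH.
- by move=> t IHt v IHv d; rewrite IHt IHv.
- by move=> n d; case: ifP => //; rewrite ?subn0.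
- by move=> t IH d; rewrite IH.
Qed.

Lemma inst_lams n t d env : inst_t d env (lams n t) = lams n (inst_t (n + d) env t).
Proof. by elim: n d => [|n IH] d //=; rewrite IH addSnnS. Qed.

Lemma closed_lams n t d : closed_at_t d (lams n t) = closed_at_t (n + d) t.
Proof. by elim: n d => [|n IH] d //=; rewrite IH addSnnS. Qed.

Fixpoint apps (t : lterm) (vs : seq lvalue) : lterm :=
  match vs with [::] => t | v :: vs => apps (App t v) vs end.

Lemma apps_cat t l1 l2 : apps (apps t l1) l2 = apps t (l1 ++ l2).
Proof. by elim: l1 t => //= v l IH t; rewrite IH. Qed.

Lemma inst_apps d env t vs :
  inst_t d env (apps t vs) = apps (inst_t d env t) (map (inst_v d env) vs).
Proof. by elim: vs t => //= v vs IH t; rewrite IH. Qed.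

Lemma closed_apps k t vs :
  closed_at_t k (apps t vs) = closed_at_t k t && all (closed_at_v k) vs.
Proof. by elim: vs t => [|v vs IH] t /=; rewrite ?andbT // IH /= andbA. Qed.

Lemma step_apps t u vs : det_step t u -> det_step (apps t vs) (apps u vs).
Proof. by elim: vs t u => //= v vs IH t u H; apply: IH; apply: det_ctx. Qed.

Lemma stepn_apps n t u vs : det_stepn n t u -> det_stepn n (apps t vs) (apps u vs).
Proof.
elim=> [t'|m t' u' w H _ IH]; first by constructor.
by apply: det_trans (step_apps _ H) IH.
Qed.

Lemma stepn_cat n m t u w : det_stepn n t u -> det_stepn m u w -> det_stepn (n + m) t w.
Proof.
elim=> [t'|k t' u' w' H _ IH] // H2.
by apply: det_trans H (IH H2).
Qed.

Definition comb k body := Lam (lams k body).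

Lemma comb_beta k body env vs extra : all cv vs -> size vs = k.+1 -> all cv env ->
  det_stepn k.+1 (apps (Val (Lam (lams k (inst_t k.+1 env body)))) (vs ++ extra))
    (apps (inst_t 0 (catrev vs env) body) extra).
Proof.
elim: k env vs => [|k IH] env [|v vs] //= /andP[Hv Hvs] [Hsz] Henv.
- case: vs Hvs Hsz => // _ _ /=.
  apply: det_trans; first by apply: step_apps; apply: det_beta.
  rewrite (proj1 (subst_inst Hv)) (proj1 (inst_comp Hv Henv)); constructor.
- apply: det_trans; first by apply: step_apps; apply: det_beta.
  rewrite (proj1 (subst_inst Hv)) /= inst_lams addn1 (proj1 (inst_comp Hv Henv)).
  by apply: IH => //=; rewrite Hv.
Qed.

Definition red t u lo hi := exists n, det_stepn n t u /\ lo <= n /\ n <= hi.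

Lemma red_refl t : red t t 0 0.
Proof. by exists 0; split => //; constructor. Qed.

Lemma red_trans t u w a b c d : red t u a b -> red u w c d -> red t w (a + c) (b + d).
Proof.
move=> [n [H1 [H2 H3]]] [m [H4 [H5 H6]]]; exists (n + m); split.
  exact: stepn_cat H1 H4.
by split; lia.
Qed.

Lemma red_le t u lo hi lo' hi' : red t u lo hi -> lo' <= lo -> hi <= hi' -> red t u lo' hi'.
Proof. by move=> [n [H1 [H2 H3]]] H4 H5; exists n; split => //; split; lia. Qed.

Lemma red_comb k body args u lo hi :
  k.+1 <= size args -> all cv (take k.+1 args) ->
  red (apps (inst_t 0 (catrev (take k.+1 args) [::]) body) (drop k.+1 args)) u lo hi ->
  red (apps (Val (comb k body)) args) u (k.+1 + lo) (k.+1 + hi).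
Proof.
move=> Hsz Hcl H.
have Hs := @comb_beta k body [::] (take k.+1 args) (drop k.+1 args) Hcl.
rewrite (proj1 inst_nil) cat_take_drop size_takel in Hs => //.
have H1 : red (apps (Val (comb k body)) args) (apps (inst_t 0 (catrev (take k.+1 args) [::]) body) (drop k.+1 args)) k.+1 k.+1.
  by exists k.+1; split => //; apply: Hs.
exact: red_trans H1 H.
Qed.

Lemma inst_v_var d env n : d <= n -> n - d < size env ->
  inst_v d env (Var n) = nth (Var 0) env (n - d).
Proof. by move=> H1 H2 /=; rewrite ltnNge H1 /= H2. Qed.

Lemma apps_cons t v vs : apps t (v :: vs) = apps (App t v) vs.
Proof. by []. Qed.

Lemma cv_comb k body : cv (comb k body) = closed_at_t k.+1 body.
Proof. by rewrite /cv /comb /= closed_lams addn1. Qed.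

Lemma red_combE X k body args u lo hi : X = comb k body ->
  k.+1 <= size args -> all cv (take k.+1 args) ->
  red (apps (inst_t 0 (catrev (take k.+1 args) [::]) body) (drop k.+1 args)) u lo hi ->
  red (apps (Val X) args) u (k.+1 + lo) (k.+1 + hi).
Proof. by move=> ->; apply: red_comb. Qed.

Definition selv k i := comb k (Val (Var (k - i))).

Lemma selv_cv k i : i <= k -> cv (selv k i).
Proof. by move=> H; rewrite /selv cv_comb /=; lia. Qed.

Lemma red_sel k i args u lo hi : i <= k ->
  k.+1 <= size args -> all cv (take k.+1 args) ->
  red (apps (Val (nth (Var 0) args i)) (drop k.+1 args)) u lo hi ->
  red (apps (Val (selv k i)) args) u (k.+1 + lo) (k.+1 + hi).
Proof.
move=> Hi Hsz Hcl H; apply: red_comb => //.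
have Hs : size (take k.+1 args) = k.+1 by rewrite size_takel.
rewrite /= -/(rev _) size_rev Hs ifT; last by lia.
rewrite nth_rev; last by rewrite Hs; lia.
rewrite Hs nth_take; last by lia.
by have -> : k.+1 - (k - i - 0).+1 = i by lia.
Qed.

Definition lnil := comb 1 (Val (Var 1)).
Definition lcons x xs := comb 1 (apps (Val (Var 0)) [:: x; xs]).
Fixpoint lst (l : seq lvalue) : lvalue :=
  match l with [::] => lnil | x :: l => lcons x (lst l) end.

Lemma inst_lcons d env x xs :
  inst_v d env (lcons x xs) = lcons (inst_v d.+2 env x) (inst_v d.+2 env xs).
Proof. by []. Qed.

Lemma lnil_cv : cv lnil. Proof. by []. Qed.
Lemma lcons_cv x xs : cv x -> cv xs -> cv (lcons x xs).
Proof. by move=> Hx Hxs; rewrite /lcons cv_comb /= !cv_any. Qed.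
Lemma lst_cv L : all cv L -> cv (lst L).
Proof. elim: L => [|x L IH] /=; first by move=> _; exact: lnil_cv.
by move=> /andP[Hx HL]; apply: lcons_cv => //; apply: IH. Qed.

Lemma red_lnil n c rest u lo hi : cv n -> cv c ->
  red (apps (Val n) rest) u lo hi ->
  red (apps (Val lnil) [:: n, c & rest]) u (2 + lo) (2 + hi).
Proof. by move=> Hn Hc H; apply: red_comb => //=; rewrite ?take0 ?drop0 /= ?Hn ?Hc. Qed.

Lemma red_lcons x xs n c rest u lo hi : cv x -> cv xs -> cv n -> cv c ->
  red (apps (Val c) [:: x, xs & rest]) u lo hi ->
  red (apps (Val (lcons x xs)) [:: n, c & rest]) u (2 + lo) (2 + hi).
Proof.
move=> Hx Hxs Hn Hc H; apply: red_comb => //=; rewrite ?take0 ?drop0 /= ?Hn ?Hc //.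
by rewrite !inst_cv.
Qed.

Lemma arith1 m r : r < m -> m.+1 - (m - r - 0).+1 = r.
Proof. lia. Qed.

Section Scott.
Variable S : finType.
Definition scons (i : nat) (a : lvalue) := comb #|S| (App (Val (Var (#|S| - i))) a).

Lemma scott_cons (c : S) w : scott_str (c :: w) = scons (enum_rank c) (scott_str w).
Proof. by []. Qed.
Lemma scott_nil : scott_str ([::] : seq S) = selv #|S| #|S|.
Proof. by rewrite /selv subnn. Qed.

Lemma scons_cv i a : i < #|S| -> cv a -> cv (scons i a).
Proof. by move=> Hi Ha; rewrite /scons cv_comb /= cv_any // andbT; lia. Qed.

Lemma scott_cv (w : seq S) : cv (scott_str w).
Proof.
elim: w => [|c w IH]; first by rewrite scott_nil selv_cv.
by rewrite scott_cons scons_cv.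
Qed.

Lemma inst_scons i a d env : i < #|S| ->
  inst_v d env (scons i a) = scons i (inst_v (#|S|.+1 + d) env a).
Proof.
move=> Hi; rewrite /scons /comb /= inst_lams /=.
rewrite ifT; last by lia.
by rewrite addnS addSn.
Qed.

Lemma red_scott_cons (c : S) w args rest u lo hi :
  size args = #|S|.+1 -> all cv args ->
  red (apps (Val (nth (Var 0) args (enum_rank c))) (scott_str w :: rest)) u lo hi ->
  red (apps (Val (scott_str (c :: w))) (args ++ rest)) u (#|S|.+1 + lo) (#|S|.+1 + hi).
Proof.
move=> Hsz Hcl H; rewrite scott_cons; apply: red_comb.
- by rewrite size_cat Hsz; lia.
- by rewrite take_size_cat.
rewrite take_size_cat // drop_size_cat //= -/(rev _).
  rewrite ifT; last by rewrite size_rev Hsz subn0 ltnS leq_subr.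
rewrite nth_rev; last by rewrite Hsz subn0 ltnS leq_subr.
rewrite (proj2 inst_closed _ 0 (scott_cv w)) //.
by rewrite Hsz (@arith1 #|S| (enum_rank c)).
Qed.

Lemma red_scott_nil args rest u lo hi :
  size args = #|S|.+1 -> all cv args ->
  red (apps (Val (nth (Var 0) args #|S|)) rest) u lo hi ->
  red (apps (Val (scott_str ([::] : seq S))) (args ++ rest)) u (#|S|.+1 + lo) (#|S|.+1 + hi).
Proof.
move=> Hsz Hcl H; rewrite scott_nil; apply: red_sel => //.
- by rewrite size_cat Hsz; lia.
- by rewrite take_size_cat.
by rewrite nth_cat Hsz ltnSn drop_size_cat.
Qed.
End Scott.

Lemma apps_nil t : apps t [::] = t.
Proof. by []. Qed.

Lemma closed_comb k n body : closed_at_v k (comb n body) = closed_at_t (n + k.+1) body.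
Proof. by rewrite /comb /= closed_lams. Qed.

Lemma closed_lcons k x y : closed_at_v k (lcons x y) = closed_at_v k.+2 x && closed_at_v k.+2 y.
Proof. by rewrite /lcons closed_comb /= add1n. Qed.

Arguments cv : simpl never.

Lemma all_cv_nil : all cv [::]. Proof. by []. Qed.
Lemma all_cv_cons x l : cv x -> all cv l -> all cv (x :: l).
Proof. by move=> /= -> ->. Qed.
Lemma all_cv_catrev l1 l2 : all cv l1 -> all cv l2 -> all cv (catrev l1 l2).
Proof. by elim: l1 l2 => //= x l1 IH l2 /andP[Hx H1] H2; apply: IH => //=; rewrite Hx. Qed.

Create HintDb cvdb.
#[export] Hint Resolve lnil_cv lcons_cv lst_cv all_cv_nil all_cv_cons all_cv_catrev : cvdb.
#[export] Hint Extern 1 (is_true (_ && _)) => apply/andP; split : cvdb.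

Lemma all_cv_take n l : all cv l -> all cv (take n l).
Proof. by elim: l n => [|x l IH] [|n] //= /andP[-> /IH ->]. Qed.
#[export] Hint Resolve all_cv_take : cvdb.
Ltac cvauto := solve [auto 20 with cvdb | simpl; auto 20 with cvdb].

Ltac instsimp :=
  rewrite /= ?take0 ?drop0 ?inst_apps /= ?inst_lcons /= ?apps_cat /=;
  repeat (rewrite inst_cv; last by cvauto).

Definition NR := comb 2 (apps (Val (Var 2)) [:: Var 1]).
Definition CR := comb 4 (apps (Val (Var 0)) [:: Var 0; Var 2; lcons (Var 6) (Var 3); Var 3]).
Definition REV := comb 3 (apps (Val (Var 0)) [:: NR; CR; Var 2; Var 1; Var 3]).
Lemma NR_cv : cv NR. Proof. by []. Qed.
Lemma CR_cv : cv CR. Proof. by []. Qed.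
Lemma REV_cv : cv REV. Proof. by []. Qed.
Lemma NR_eq : NR = comb 2 (apps (Val (Var 2)) [:: Var 1]). Proof. by []. Qed.
Lemma CR_eq : CR = comb 4 (apps (Val (Var 0)) [:: Var 0; Var 2; lcons (Var 6) (Var 3); Var 3]).
Proof. by []. Qed.
Lemma REV_eq : REV = comb 3 (apps (Val (Var 0)) [:: NR; CR; Var 2; Var 1; Var 3]).
Proof. by []. Qed.
#[export] Hint Resolve NR_cv CR_cv REV_cv : cvdb.

Opaque apps comb lnil lcons NR CR REV.

Lemma REV_lem L A k : all cv L -> all cv A -> cv k ->
  red (apps (Val REV) [:: REV; k; lst A; lst L]) (apps (Val k) [:: lst (catrev L A)])
      (11 * size L + 9) (11 * size L + 9).
Proof.
elim: L A => [|x L IH] A HL HA Hk.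
{ eapply red_le.
  { apply: (red_combE REV_eq) => //; first by cvauto.
    instsimp.
    apply: red_lnil; try cvauto.
    apply: (red_combE NR_eq) => //; first by cvauto.
    instsimp.
    exact: red_refl. }
  all: simpl; lia. }
move: HL => /= /andP[Hx HL].
eapply red_le.
{ apply: (red_combE REV_eq) => //; first by cvauto.
  instsimp.
  apply: red_lcons; try cvauto.
  apply: (red_combE CR_eq) => //; first by cvauto.
  instsimp.
  apply: (IH (x :: A)) => //; cvauto. }
all: simpl; lia.
Qed.

Opaque apps comb lnil lcons NR CR REV.
Arguments cv : simpl never.

Lemma all_closed_map (T : Type) k (F : T -> lvalue) l :
  (forall x, cv (F x)) -> all (closed_at_v k) (map F l).
Proof. by move=> H; elim: l => //= x l ->; rewrite cv_any. Qed.

Lemma inst_map_cv (T : Type) d env (F : T -> lvalue) l :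
  (forall x, cv (F x)) -> map (inst_v d env) (map F l) = map F l.
Proof. by move=> H; elim: l => //= x l ->; rewrite inst_cv. Qed.

Lemma all_cv_map (T : Type) (F : T -> lvalue) l :
  (forall x, cv (F x)) -> all cv (map F l).
Proof. by move=> H; elim: l => //= x l ->; rewrite H. Qed.

Lemma nth_map_enum (T : finType) (F : T -> lvalue) (x : T) :
  nth (Var 0) (map F (enum T)) (enum_rank x) = F x.
Proof. by rewrite (nth_map x) ?nth_enum_rank // -cardE ltn_ord. Qed.

Lemma size_map_enum (T : finType) (F : T -> lvalue) : size (map F (enum T)) = #|T|.
Proof. by rewrite size_map -cardE. Qed.

Lemma lt_s2 n : n < n.+2. Proof. lia. Qed.
Lemma s21 n : n.+2 - n.+1 = 1. Proof. lia. Qed.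
Lemma s21_lt n : n.+2 - n.+1 < 3. Proof. lia. Qed.

Section Machine.
Variables (S Q : finType) (delta : Q -> option S -> option (Q * option S * move)).
Variables (qin qfin : Q).

Definition symidx (a : option S) : nat := if a is Some c then nat_of_ord (enum_rank c) else #|S|.
Definition symv (a : option S) := selv #|S| (symidx a).
Definition qv (q : Q) := selv #|Q|.-1 (enum_rank q).

Lemma symidx_le a : symidx a <= #|S|.
Proof. by case: a => [c|] //=; apply: ltnW; apply: ltn_ord. Qed.

Lemma card_Q_gt0 (q : Q) : 0 < #|Q|.
Proof. by apply/card_gt0P; exists q. Qed.

Lemma symv_cv a : cv (symv a).
Proof. exact: selv_cv (symidx_le a). Qed.
Lemma qv_cv q : cv (qv q).
Proof. apply: selv_cv; rewrite -ltnS prednK; [exact: ltn_ord | exact: card_Q_gt0 q]. Qed.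
#[local] Hint Resolve symv_cv qv_cv : cvdb.

Definition symlist := map Some (enum S) ++ [:: None].

Lemma nth_symlist (F : option S -> lvalue) a :
  nth (Var 0) (map F symlist) (symidx a) = F a.
Proof.
rewrite /symlist map_cat -map_comp nth_cat size_map_enum.
case: a => [c|] /=; last by rewrite ltnn subnn.
by rewrite ltn_ord (nth_map_enum (F \o Some)).
Qed.

Lemma size_symlist (F : option S -> lvalue) : size (map F symlist) = #|S|.+1.
Proof. by rewrite /symlist map_cat -map_comp size_cat size_map_enum addn1. Qed.

Lemma red_symv a arms rest u lo hi :
  size arms = #|S|.+1 -> all cv arms ->
  red (apps (Val (nth (Var 0) arms (symidx a))) rest) u lo hi ->
  red (apps (Val (symv a)) (arms ++ rest)) u (#|S|.+1 + lo) (#|S|.+1 + hi).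
Proof.
move=> Hsz Hcl H; apply: red_sel.
- exact: symidx_le.
- by rewrite size_cat Hsz leq_addr.
- by rewrite -Hsz take_size_cat.
rewrite nth_cat Hsz ltnS symidx_le.
by rewrite -Hsz drop_size_cat.
Qed.

Lemma red_qv q arms rest u lo hi :
  size arms = #|Q| -> all cv arms ->
  red (apps (Val (nth (Var 0) arms (enum_rank q))) rest) u lo hi ->
  red (apps (Val (qv q)) (arms ++ rest)) u (#|Q| + lo) (#|Q| + hi).
Proof.
move=> Hsz Hcl H.
have Hq : #|Q|.-1.+1 = #|Q| by rewrite prednK // (card_Q_gt0 q).
rewrite -Hq; apply: red_sel.
- by rewrite -ltnS Hq ltn_ord.
- by rewrite Hq size_cat Hsz leq_addr.
- by rewrite Hq -Hsz take_size_cat.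
rewrite nth_cat Hsz ltn_ord.
by have -> : drop #|Q|.-1.+1 (arms ++ rest) = rest by rewrite Hq -Hsz drop_size_cat.
Qed.



Definition D (c : S) := comb 2 (apps (Val (Var 0)) [:: Var 0; Var 2; scons S (enum_rank c) (Var #|S|.+2)]).
Lemma D_cv c : cv (D c).
Proof. rewrite /D cv_comb closed_apps /= andbT /scons closed_comb /=.
apply/andP; split; lia. Qed.
Opaque D.
Lemma D_eq c : D c = comb 2 (apps (Val (Var 0)) [:: Var 0; Var 2; scons S (enum_rank c) (Var #|S|.+2)]).
Proof. by []. Qed.
Definition CC := comb 3 (apps (Val (Var 3)) (map D (enum S) ++ [:: lnil; Var 2; Var 1; Var 0])).
Lemma CC_eq : CC = comb 3 (apps (Val (Var 3)) (map D (enum S) ++ [:: lnil; Var 2; Var 1; Var 0])).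
Proof. by []. Qed.
Lemma CC_cv : cv CC.
Proof. by rewrite /CC cv_comb closed_apps all_cat all_closed_map //; exact: D_cv. Qed.
Opaque CC.
Definition NC := comb 1 (Val (Var 1)).
Lemma NC_eq : NC = comb 1 (Val (Var 1)). Proof. by []. Qed.
Lemma NC_cv : cv NC. Proof. by []. Qed.
Opaque NC.
Definition CONV := comb 2 (apps (Val (Var 1)) [:: NC; CC; Var 0; Var 2]).
Lemma CONV_eq : CONV = comb 2 (apps (Val (Var 1)) [:: NC; CC; Var 0; Var 2]).
Proof. by []. Qed.
Lemma CONV_cv : cv CONV.
Proof. by rewrite /CONV cv_comb closed_apps /= !cv_any ?NC_cv ?CC_cv. Qed.
Opaque CONV.
#[local] Hint Resolve D_cv CC_cv NC_cv CONV_cv : cvdb.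
Lemma scott_cvS (w : seq S) : cv (scott_str w). Proof. exact: scott_cv. Qed.
Lemma lstsym_cv l : cv (lst (map symv l)).
Proof. by apply: lst_cv; apply: all_cv_map; exact: symv_cv. Qed.
Lemma all_lstsym l : all cv (map symv l).
Proof. by apply: all_cv_map; exact: symv_cv. Qed.
#[local] Hint Resolve scott_cvS lstsym_cv all_lstsym : cvdb.

Opaque symv qv selv scons.

Lemma CONV_lem L A :
  red (apps (Val CONV) [:: CONV; lst (map symv (map Some L)); scott_str A])
      (Val (scott_str (catrev L A))) ((#|S| + 13) * size L + 7) ((#|S| + 13) * size L + 7).
Proof.
elim: L A => [|c L IH] A.
{ eapply red_le.
  { apply: (red_combE CONV_eq) => //; first by cvauto.
    instsimp.
    apply: red_lnil; try cvauto.
    apply: (red_combE NC_eq) => //; first by cvauto.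
    instsimp. rewrite apps_nil.
    exact: red_refl. }
  all: simpl; lia. }
eapply red_le.
{ apply: (red_combE CONV_eq) => //; first by cvauto.
  instsimp.
  apply: red_lcons; try cvauto.
  apply: (red_combE CC_eq) => //; first by cvauto.
  instsimp.
  rewrite cats0 map_cat (inst_map_cv _ _ _ D_cv) /= (inst_cv _ _ lnil_cv).
  rewrite -(cat1s lnil) catA.
  apply: red_symv.
  - by rewrite size_cat size_map_enum addn1.
  - by rewrite all_cat all_cv_map /= ?andbT; [exact: lnil_cv | exact: D_cv].
  rewrite nth_cat size_map_enum /= ltn_ord nth_map_enum.
  apply: (red_combE (D_eq c)) => //; first by cvauto.
  instsimp.
  rewrite inst_scons // addn0 inst_v_var; [|exact: lt_s2|exact: s21_lt].
  rewrite s21 /=.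
  exact: (IH (c :: A)). }
all: simpl; lia.
Qed.

Lemma cv_anyE v k : cv v -> closed_at_v k v = true.
Proof. exact: cv_any. Qed.
Ltac clos := rewrite cv_comb ?closed_apps /= ?closed_lcons /= ?closed_lams /= ?andbT;
  repeat (rewrite cv_anyE; last by auto with cvdb); rewrite /= ?andbT ?addn2 //.

Definition snil := scott_str ([::] : seq S).
Lemma snil_eq : snil = scott_str ([::] : seq S). Proof. by []. Qed.
Lemma snil_cv : cv snil. Proof. exact: scott_cv. Qed.
Opaque snil.
#[local] Hint Resolve snil_cv : cvdb.
Definition K2 := comb 0 (apps (Val CONV) [:: CONV; Var 0; snil]).
Lemma K2_eq : K2 = comb 0 (apps (Val CONV) [:: CONV; Var 0; snil]). Proof. by []. Qed.
Lemma K2_cv : cv K2. Proof. by rewrite /K2; clos. Qed.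
Opaque K2.
Definition RN q' (b : option S) := comb 1 (apps (Val (Var 0)) [:: Var 0; qv q'; symv None; lcons (symv b) (Var 3); lnil]).
Lemma RN_eq q' b : RN q' b = comb 1 (apps (Val (Var 0)) [:: Var 0; qv q'; symv None; lcons (symv b) (Var 3); lnil]). Proof. by []. Qed.
Lemma RN_cv q' b : cv (RN q' b). Proof. by rewrite /RN; clos. Qed.
Opaque RN.
Definition RC q' (b : option S) := comb 3 (apps (Val (Var 0)) [:: Var 0; qv q'; Var 3; lcons (symv b) (Var 3); Var 2]).
Lemma RC_eq q' b : RC q' b = comb 3 (apps (Val (Var 0)) [:: Var 0; qv q'; Var 3; lcons (symv b) (Var 3); Var 2]). Proof. by []. Qed.
Lemma RC_cv q' b : cv (RC q' b). Proof. by rewrite /RC; clos. Qed.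
Opaque RC.
Definition LN q' (b : option S) := comb 1 (apps (Val (Var 0)) [:: Var 0; qv q'; symv None; lnil; lcons (symv b) (Var 3)]).
Lemma LN_eq q' b : LN q' b = comb 1 (apps (Val (Var 0)) [:: Var 0; qv q'; symv None; lnil; lcons (symv b) (Var 3)]). Proof. by []. Qed.
Lemma LN_cv q' b : cv (LN q' b). Proof. by rewrite /LN; clos. Qed.
Opaque LN.
Definition LC q' (b : option S) := comb 3 (apps (Val (Var 0)) [:: Var 0; qv q'; Var 3; Var 2; lcons (symv b) (Var 3)]).
Lemma LC_eq q' b : LC q' b = comb 3 (apps (Val (Var 0)) [:: Var 0; qv q'; Var 3; Var 2; lcons (symv b) (Var 3)]). Proof. by []. Qed.
Lemma LC_cv q' b : cv (LC q' b). Proof. by rewrite /LC; clos. Qed.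
Opaque LC.
#[local] Hint Resolve K2_cv RN_cv RC_cv LN_cv LC_cv : cvdb.

Definition Cbody q a :=
  match delta q a with
  | None => apps (Val REV) [:: REV; K2; lnil; Var 1]
  | Some (q', b, MStay) => apps (Val (Var 0)) [:: Var 0; qv q'; symv b; Var 2; Var 1]
  | Some (q', b, MRight) => apps (Val (Var 1)) [:: RN q' b; RC q' b; Var 2; Var 0]
  | Some (q', b, MLeft) => apps (Val (Var 2)) [:: LN q' b; LC q' b; Var 1; Var 0]
  end.
Definition C q a := comb 2 (Cbody q a).
Lemma C_eq q a : C q a = comb 2 (Cbody q a). Proof. by []. Qed.
Lemma C_cv q a : cv (C q a).
Proof. rewrite /C /Cbody; case: (delta q a) => [[[q' b] []]|]; clos. Qed.
Opaque C.
#[local] Hint Resolve C_cv : cvdb.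

Definition B q := comb 3 (apps (Val (Var 3)) (map (C q) symlist ++ [:: Var 2; Var 1; Var 0])).
Lemma B_eq q : B q = comb 3 (apps (Val (Var 3)) (map (C q) symlist ++ [:: Var 2; Var 1; Var 0])). Proof. by []. Qed.
Lemma B_cv q : cv (B q).
Proof. by rewrite /B cv_comb closed_apps all_cat all_closed_map //; exact: C_cv. Qed.
Opaque B.
#[local] Hint Resolve B_cv : cvdb.

Definition STEP := comb 4 (apps (Val (Var 3)) (map B (enum Q) ++ [:: Var 2; Var 1; Var 0; Var 4])).
Lemma STEP_eq : STEP = comb 4 (apps (Val (Var 3)) (map B (enum Q) ++ [:: Var 2; Var 1; Var 0; Var 4])). Proof. by []. Qed.
Lemma STEP_cv : cv STEP.
Proof. by rewrite /STEP cv_comb closed_apps all_cat all_closed_map //; exact: B_cv. Qed.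
Opaque STEP.
#[local] Hint Resolve STEP_cv : cvdb.

Lemma dispatch q a lv rv : cv lv -> cv rv ->
  red (apps (Val STEP) [:: STEP; qv q; symv a; lv; rv]) (apps (Val (C q a)) [:: lv; rv; STEP])
      (5 + (#|Q| + (4 + #|S|.+1))) (5 + (#|Q| + (4 + #|S|.+1))).
Proof.
move=> Hl Hr.
eapply red_le.
{ apply: (red_combE STEP_eq) => //; first by cvauto.
instsimp.
rewrite cats0 map_cat (inst_map_cv _ _ _ B_cv) /=.
apply: red_qv.
- exact: size_map_enum.
- by apply: all_cv_map; exact: B_cv.
rewrite nth_map_enum.
apply: (red_combE (B_eq q)) => //; first by cvauto.
instsimp.
rewrite cats0 map_cat (inst_map_cv _ _ _ (C_cv q)) /=.
apply: red_symv.
- exact: size_symlist.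
- by apply: all_cv_map; exact: C_cv.
rewrite nth_symlist.
exact: red_refl. }
all: lia.
Qed.


Definition loopterm (c : config S Q) : lterm :=
  let: (l, a, r, q) := c in
  apps (Val STEP) [:: STEP; qv q; symv a; lst (map symv (rev l)); lst (map symv r)].

Definition nS := #|S|.
Definition nQ := #|Q|.

Definition Kst := #|Q| + #|S| + 20.

Lemma sz0 (T : Type) : size (@nil T) = 0. Proof. by []. Qed.
Lemma szS (T : Type) (x : T) s : size (x :: s) = (size s).+1. Proof. by []. Qed.
Ltac arith := rewrite ?/Kst ?size_map ?size_rev ?sz0 ?szS; do 3 (try rewrite -/nS); do 3 (try rewrite -/nQ); nia.

Lemma step_lem c d : tm_step delta c d -> red (loopterm c) (loopterm d) 1 Kst.
Proof.
rewrite /Kst.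
case=> [s a r q q' b H|s' c0 a r q q' b H|a r q q' b H|s a c0 r' q q' b H|s a q q' b H] /=.
{ eapply red_le.
  { apply: red_trans; first by apply: dispatch; cvauto.
    apply: (red_combE (C_eq q a)) => //; first by cvauto.
    rewrite /Cbody H.
    instsimp.
    exact: red_refl. }
  all: arith. }
{ eapply red_le.
  { apply: red_trans; first by apply: dispatch; cvauto.
    apply: (red_combE (C_eq q a)) => //; first by cvauto.
    rewrite /Cbody H.
    instsimp.
    rewrite rev_rcons /=.
    apply: red_lcons; try cvauto.
    apply: (red_combE (LC_eq q' b)) => //; first by cvauto.
    instsimp.
    exact: red_refl. }
  all: arith. }
{ eapply red_le.
  { apply: red_trans; first by apply: dispatch; cvauto.
    apply: (red_combE (C_eq q a)) => //; first by cvauto.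
    rewrite /Cbody H.
    instsimp.
    apply: red_lnil; try cvauto.
    apply: (red_combE (LN_eq q' b)) => //; first by cvauto.
    instsimp.
    exact: red_refl. }
  all: arith. }
{ eapply red_le.
  { apply: red_trans; first by apply: dispatch; cvauto.
    apply: (red_combE (C_eq q a)) => //; first by cvauto.
    rewrite /Cbody H.
    instsimp.
    apply: red_lcons; try cvauto.
    apply: (red_combE (RC_eq q' b)) => //; first by cvauto.
    instsimp.
    rewrite rev_rcons /=.
    exact: red_refl. }
  all: arith. }
{ eapply red_le.
  { apply: red_trans; first by apply: dispatch; cvauto.
    apply: (red_combE (C_eq q a)) => //; first by cvauto.
    rewrite /Cbody H.
    instsimp.
    apply: red_lnil; try cvauto.
    apply: (red_combE (RN_eq q' b)) => //; first by cvauto.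
    instsimp.
    rewrite rev_rcons /=.
    exact: red_refl. }
  all: arith. }
Qed.


Lemma halt_lem L : delta qfin None = None ->
  red (loopterm ([::], None, map Some L, qfin)) (Val (scott_str L))
      (nQ + nS + 30 + (nS + 24) * size L) (nQ + nS + 30 + (nS + 24) * size L).
Proof.
move=> Hn /=.
eapply red_le.
{ apply: red_trans; first by apply: dispatch; cvauto.
  apply: (red_combE (C_eq qfin None)) => //; first by cvauto.
  rewrite /Cbody Hn.
  instsimp.
  apply: red_trans; first by apply: (@REV_lem (map symv (map Some L)) [::] K2); cvauto.
  apply: (red_combE K2_eq) => //; first by cvauto.
  instsimp.
  rewrite -/(rev _) -!map_rev.
  have := CONV_lem (rev L) [::].
  rewrite -/(rev _) revK snil_eq; exact. }
all: arith.
Qed.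

Lemma sim_lem n c d : tm_stepn delta n c d -> red (loopterm c) (loopterm d) n (Kst * n).
Proof.
elim=> [c'|k c' d' e' H _ IH]; first by rewrite muln0; exact: red_refl.
eapply red_le; first exact: red_trans (step_lem H) IH.
- by [].
- by rewrite mulnS.
Qed.

Definition tsize (c : config S Q) := let: (l, a, r, q) := c in size l + size r.

Lemma tsize_step c d : tm_step delta c d -> tsize d <= tsize c + 1.
Proof. by case=> * /=; rewrite ?size_rcons /=; lia. Qed.

Lemma tsize_lem n c d : tm_stepn delta n c d -> tsize d <= tsize c + n.
Proof.
elim=> [c'|k c' d' e' H _ IH]; first by rewrite addn0.
have := tsize_step H; lia.
Qed.

Definition K1 := comb 0 (apps (Val STEP) [:: STEP; qv qin; symv None; lnil; Var 0]).
Lemma K1_eq : K1 = comb 0 (apps (Val STEP) [:: STEP; qv qin; symv None; lnil; Var 0]). Proof. by []. Qed.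
Lemma K1_cv : cv K1. Proof. by rewrite /K1; clos. Qed.
Opaque K1.
#[local] Hint Resolve K1_cv : cvdb.
Definition E (c : S) := comb 2 (apps (Val (Var 0)) [:: Var 0; lcons (symv (Some c)) (Var 3); Var 2]).
Lemma E_eq c : E c = comb 2 (apps (Val (Var 0)) [:: Var 0; lcons (symv (Some c)) (Var 3); Var 2]). Proof. by []. Qed.
Lemma E_cv c : cv (E c). Proof. by rewrite /E; clos. Qed.
Opaque E.
#[local] Hint Resolve E_cv : cvdb.
Definition Enil := comb 1 (apps (Val REV) [:: REV; K1; lnil; Var 1]).
Lemma Enil_eq : Enil = comb 1 (apps (Val REV) [:: REV; K1; lnil; Var 1]). Proof. by []. Qed.
Lemma Enil_cv : cv Enil. Proof. by rewrite /Enil; clos. Qed.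
Opaque Enil.
#[local] Hint Resolve Enil_cv : cvdb.
Definition IREV := comb 2 (apps (Val (Var 0)) (map E (enum S) ++ [:: Enil; Var 1; Var 2])).
Lemma IREV_eq : IREV = comb 2 (apps (Val (Var 0)) (map E (enum S) ++ [:: Enil; Var 1; Var 2])). Proof. by []. Qed.
Lemma IREV_cv : cv IREV.
Proof.
rewrite /IREV cv_comb closed_apps all_cat all_closed_map /=; last exact: E_cv.
by rewrite cv_anyE // Enil_cv.
Qed.
Opaque IREV.
#[local] Hint Resolve IREV_cv : cvdb.
Definition Mv := comb 0 (apps (Val IREV) [:: IREV; lnil; Var 0]).
Lemma Mv_eq : Mv = comb 0 (apps (Val IREV) [:: IREV; lnil; Var 0]). Proof. by []. Qed.
Lemma Mv_cv : cv Mv. Proof. by rewrite /Mv; clos. Qed.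
Opaque Mv.

Lemma IREV_lem w A : all cv A ->
  red (apps (Val IREV) [:: IREV; lst A; scott_str w])
      (apps (Val REV) [:: REV; K1; lnil; lst (catrev (map symv (map Some w)) A)])
      ((nS + 7) * size w + nS + 6) ((nS + 7) * size w + nS + 6).
Proof.
elim: w A => [|c w IH] A HA.
{ eapply red_le.
  { apply: (red_combE IREV_eq) => //; first by cvauto.
    instsimp.
    rewrite cats0 map_cat (inst_map_cv _ _ _ E_cv) /= (inst_cv _ _ Enil_cv).
    rewrite -(cat1s Enil) catA.
    apply: red_scott_nil.
    - by rewrite size_cat size_map_enum addn1.
    - by rewrite all_cat all_cv_map /= ?andbT; [exact: Enil_cv | exact: E_cv].
    rewrite nth_cat size_map_enum ltnn subnn /=.
    apply: (red_combE Enil_eq) => //; first by cvauto.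
    instsimp.
    exact: red_refl. }
  all: arith. }
eapply red_le.
{ apply: (red_combE IREV_eq) => //; first by cvauto.
  instsimp.
  rewrite cats0 map_cat (inst_map_cv _ _ _ E_cv) /= (inst_cv _ _ Enil_cv).
  rewrite -(cat1s Enil) catA.
  apply: red_scott_cons.
  - by rewrite size_cat size_map_enum addn1.
  - by rewrite all_cat all_cv_map /= ?andbT; [exact: Enil_cv | exact: E_cv].
  rewrite nth_cat size_map_enum ltn_ord nth_map_enum.
  apply: (red_combE (E_eq c)) => //; first by cvauto.
  instsimp.
  apply: (IH (symv (Some c) :: A)); cvauto. }
all: arith.
Qed.

Lemma init_lem w :
  red (apps (Val Mv) [:: scott_str w]) (loopterm ([::], None, map Some w, qin))
      ((nS + 18) * size w + nS + 17) ((nS + 18) * size w + nS + 17).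
Proof.
eapply red_le.
{ apply: (red_combE Mv_eq) => //; first by cvauto.
  instsimp.
  apply: red_trans; first by apply: (IREV_lem w (A := [::])).
  have HR := @REV_lem (catrev (map symv (map Some w)) [::]) [::] K1.
  have Hs : size (catrev (map symv (map Some w)) [::]) = size w by rewrite -/(rev _) size_rev !size_map.
  rewrite Hs in HR.
  apply: red_trans; first by apply: HR; cvauto.
  apply: (red_combE K1_eq) => //; first by cvauto.
  instsimp.
  rewrite -!/(rev _) revK.
  exact: red_refl. }
all: arith.
Qed.

End Machine.

Unset Implicit Arguments.

Theorem mainTheorem9 (S Q : finType) (qin qfin : Q)
  (delta : Q -> option S -> option (Q * option S * move))
  (Hwf : tm_wf qfin delta)
  (f : seq S -> seq S) (g : nat -> nat)
  (Hcomp : tm_computes qin qfin delta f g) :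
  exists (M : lterm) (A B C : rat),
    lclosed M /\ (0 < A)%R /\ (0 < B)%R /\ (0 < C)%R /\
    forall s : seq S, exists n : nat,
      det_stepn n (App M (scott_str s)) (Val (scott_str (f s))) /\
      (A * ((g (size s) + size s)%:R) <= n%:R)%R /\
      (n%:R <= B * ((g (size s) + size s)%:R) + C)%R.
Proof.
pose Bn := (Kst S Q + 2 * nS S + 42)%N.
pose Cn := (nQ Q + 2 * nS S + 47)%N.
exists (Val (Mv delta qin)), 1%R, (Bn%:R)%R, (Cn%:R)%R.
split; first exact: Mv_cv.
split; first exact: ltr01.
split; first by rewrite ltr0n /Bn; lia.
split; first by rewrite ltr0n /Cn; lia.
move=> s.
have Hrun := Hcomp s.
have Hwfn : delta qfin None = None by apply/Hwf.
have H1 := init_lem delta qin s.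
have H2 := sim_lem Hrun.
have H3 := halt_lem (f s) Hwfn.
have Hsz := tsize_lem Hrun.
rewrite /= !size_map in Hsz.
have [n [Hn [Hlo Hhi]]] := red_trans (red_trans H1 H2) H3.
exists n; split; first exact: Hn.
rewrite mul1r ler_nat -natrM -natrD ler_nat.
rewrite /Bn /Cn.
move: Hlo Hhi Hsz; set x := size s; set y := g x; set z := size (f s).
move: (nS S) (nQ Q) (Kst S Q) => a b k.
move=> *; split; nia.
Qed.
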